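(* Let $(T,\sigma)$ be a confluent temperature-1 tile assembly system. If the binding graph of an assembly path $\alpha$ is an ultimately periodic path $(0,0).mp^{\omega}$ (with $m,p$ finite free words, $p\neq\epsilon$), then $\alpha$ is an ultimately periodic assembly path, i.e. there are finite words $m',p'$ with $p'\ne\epsilon$ such that the binding graph of $\alpha$ is $(0,0).m'p'^{\omega}$ and $\alpha(\vec{m'}+i\vec{p'}+\vec q)=\alpha(\vec{m'}+\vec q)$ for all $i\ge 0$ and all prefixes $q$ of $p'$.
   Context: Directions $D=\{E=(1,0),N=(0,1),S=(0,-1),W=(-1,0)\}$; $\mathbb Z^2$ is the grid graph. A free path is a word over $D$ whose associated walk is simple. For a point $A$ and a free path $m$, $A.m$ is the path starting at $A$ and following the letters of $m$; for finite $m$, $\vec m$ is the sum of its letters. For finite $p\neq\epsilon$, $p^\omega=ppp\cdots$. A path $A.mp^\omega$ ($m,p$ finite, $p\ne\epsilon$) is ultimately periodic. Tile assembly: $\Sigma$ is a finite glue alphabet; a tile type is a map $t:D\to\Sigma$, written $d\mapsto t_d$. A temperature-1 tile assembly system (TAS) is a pair $(T,\sigma)$ with $T$ a finite set of tile types and $\sigma$ a tile type (the seed). An assembly is a partial map $\alpha:\mathbb Z^2\to T\cup\{\sigma\}$ (if $\sigma\notin T$, $\sigma$ is used at most once). Its binding graph has vertex set $\mathrm{Dom}(\alpha)$ and an edge between $v$ and $v+d$ ($d\in D$) iff $\alpha(v)_d=\alpha(v+d)_{-d}$. $\alpha$ is stable if its binding graph is connected, and producible if it is stable and $\alpha((0,0))=\sigma$.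 The TAS is confluent if any two producible assemblies agree on the intersection of their domains. An assembly path is a producible assembly whose binding graph is a path starting at $(0,0)$. *)

(* Defs.v *)
From Stdlib Require Import ZArith List Relations.
Import ListNotations.
Open Scope Z_scope.

Inductive dir : Type := DE | DN | DS | DW.

Definition point : Type := (Z * Z)%type.

Definition vec (d : dir) : point :=
  match d with DE => (1, 0) | DN => (0, 1) | DS => (0, -1) | DW => (-1, 0) end.

Definition opp (d : dir) : dir :=
  match d with DE => DW | DN => DS | DS => DN | DW => DE end.

Definition add (u v : point) : point := (fst u + fst v, snd u + snd v).
Definition scal (k : Z) (u : point) : point := (k * fst u, k * snd u).
Definition origin : point := (0, 0).

(** \vec m : the sum of the letters of a finite word. *)
Definition word_vec (m : list dir) : point :=
  fold_right (fun d acc => add (vec d) acc) origin m.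

(** The infinite word m p^omega, as a function nat -> dir (p <> nil assumed). *)
Definition upw (m p : list dir) (i : nat) : dir :=
  if Nat.ltb i (length m) then nth i m DE
  else nth ((i - length m) mod length p)%nat p DE.

Fixpoint walk (A : point) (w : nat -> dir) (n : nat) : point :=
  match n with
  | O => A
  | S k => add (walk A w k) (vec (w k))
  end.

Definition tile (Sigma : Type) : Type := dir -> Sigma.

Definition assembly (Sigma : Type) : Type := point -> option (tile Sigma).

Definition in_dom {Sigma} (alpha : assembly Sigma) (v : point) : Prop :=
  alpha v <> None.

Definition is_assembly {Sigma} (T : list (tile Sigma)) (sigma : tile Sigma)
  (alpha : assembly Sigma) : Prop :=
  (forall v t, alpha v = Some t -> In t T \/ t = sigma) /\
  (~ In sigma T -> forall u v, alpha u = Some sigma -> alpha v = Some sigma -> u = v).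

Definition bond {Sigma} (alpha : assembly Sigma) (u v : point) : Prop :=
  exists d tu tv, v = add u (vec d) /\ alpha u = Some tu /\ alpha v = Some tv /\
                  tu d = tv (opp d).

Definition stable {Sigma} (alpha : assembly Sigma) : Prop :=
  forall u v, in_dom alpha u -> in_dom alpha v ->
    clos_refl_trans point (bond alpha) u v.

Definition producible {Sigma} (T : list (tile Sigma)) (sigma : tile Sigma)
  (alpha : assembly Sigma) : Prop :=
  is_assembly T sigma alpha /\ stable alpha /\ alpha origin = Some sigma.

Definition confluent {Sigma} (T : list (tile Sigma)) (sigma : tile Sigma) : Prop :=
  forall alpha beta : assembly Sigma,
    producible T sigma alpha -> producible T sigma beta ->
    forall v, in_dom alpha v -> in_dom beta v -> alpha v = beta v.

(** The infinite word w is free (its walk from A is simple) and the binding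
    graph of alpha is exactly the path A.w: vertex set = points of the walk,
    edges = pairs of consecutive points. *)
Definition binding_graph_is {Sigma} (alpha : assembly Sigma) (A : point)
  (w : nat -> dir) : Prop :=
  (forall i j, walk A w i = walk A w j -> i = j) /\
  (forall v, in_dom alpha v <-> exists i, walk A w i = v) /\
  (forall u v, bond alpha u v <->
     exists i, (walk A w i = u /\ walk A w (S i) = v) \/
               (walk A w i = v /\ walk A w (S i) = u)).

(* Main.v *)
Require Import Defs.
From Stdlib Require Import ZArith List Arith Lia ClassicalEpsilon Classical Relations.
Import ListNotations.

Ltac pt := repeat match goal with
  | p : point |- _ => destruct p
  | p : (Z * Z)%type |- _ => destruct p end;
  unfold add, scal, origin in *; simpl in *; f_equal; ring.

Definition psub (u v : point) : point := (fst u - fst v, snd u - snd v).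

Lemma walk_ext A w1 w2 : (forall i, w1 i = w2 i) -> forall n, walk A w1 n = walk A w2 n.
Proof. intros H n; induction n; simpl; [reflexivity| rewrite IHn, H; reflexivity]. Qed.

Lemma bgi_ext {Sigma} (alpha : assembly Sigma) A w1 w2 : (forall i, w1 i = w2 i) ->
  binding_graph_is alpha A w1 -> binding_graph_is alpha A w2.
Proof.
  intros H [H1 [H2 H3]].
  assert (E : forall n, walk A w1 n = walk A w2 n) by (apply walk_ext; auto).
  split; [|split].
  - intros i j; rewrite <- !E; auto.
  - intro v; rewrite H2; split; intros [i Hi]; exists i; rewrite ?E in *; rewrite <- ?E in *; auto.
  - intros u v; rewrite H3; split; intros [i Hi]; exists i; rewrite ?E in *; rewrite <- ?E in *; auto.
Qed.

Lemma word_vec_app l1 l2 : word_vec (l1++l2) = add (word_vec l1) (word_vec l2).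
Proof. induction l1; simpl. - destruct (word_vec l2); unfold origin; pt. - rewrite IHl1. destruct (word_vec l1), (word_vec l2); pt. Qed.

Lemma firstn_S_nth (l : list dir) k : (k < length l)%nat ->
  firstn (S k) l = firstn k l ++ [nth k l DE].
Proof.
  revert k; induction l; intros k Hk; simpl in *; [lia|].
  destruct k; simpl; [reflexivity|]. f_equal. rewrite <- IHl by lia. reflexivity.
Qed.

Lemma walk_firstn A w a l : (forall j, (j < length l)%nat -> w (a+j)%nat = nth j l DE) ->
  forall k, (k <= length l)%nat -> walk A w (a+k) = add (walk A w a) (word_vec (firstn k l)).
Proof.
  intros H k; induction k; intros Hk.
  - rewrite Nat.add_0_r. simpl. destruct (walk A w a); pt.
  - rewrite Nat.add_succ_r. simpl walk. rewrite IHk by lia.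
    rewrite firstn_S_nth by lia. rewrite word_vec_app, H by lia. simpl.
    destruct (walk A w a), (word_vec (firstn k l)), (vec (nth k l DE)); pt.
Qed.

Lemma upw_lt m p i : (i < length m)%nat -> upw m p i = nth i m DE.
Proof. intro H; unfold upw; apply Nat.ltb_lt in H; rewrite H; auto. Qed.

Lemma upw_ge m p i : (length m <= i)%nat -> upw m p i = nth ((i - length m) mod length p) p DE.
Proof. intro H; unfold upw; destruct (Nat.ltb_spec i (length m)); [lia|auto]. Qed.

Fixpoint rep (k : nat) (p : list dir) : list dir :=
  match k with O => [] | S k => p ++ rep k p end.

Lemma rep_len k p : length (rep k p) = (k * length p)%nat.
Proof. induction k; simpl; [auto|rewrite length_app, IHk; lia]. Qed.

Lemma rep_nth k p j : p <> nil -> (j < k * length p)%nat ->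
  nth j (rep k p) DE = nth (j mod length p) p DE.
Proof.
  intros Hp. assert (HP : length p <> 0%nat) by (destruct p; simpl; congruence).
  revert j; induction k; intros j Hj; simpl in *; [lia|].
  destruct (Nat.ltb_spec j (length p)).
  - rewrite app_nth1 by auto. rewrite Nat.mod_small; auto.
  - rewrite app_nth2 by lia. rewrite IHk by lia.
    f_equal. replace j with ((j - length p) + 1 * length p)%nat at 2 by lia.
    rewrite Nat.Div0.mod_add. reflexivity.
Qed.

Lemma NoDup_map_seq {A} (f : nat -> A) n : forall a,
  (forall k1 k2, (a <= k1)%nat -> (k1 < k2)%nat -> (k2 < a + n)%nat -> f k1 <> f k2) ->
  NoDup (map f (seq a n)).
Proof.
  induction n; intros a H; simpl; constructor.
  - intro Hin. apply in_map_iff in Hin. destruct Hin as [x [Hx Hin]].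
    apply in_seq in Hin. apply (H a x); auto; lia.
  - apply IHn. intros; apply H; lia.
Qed.

Lemma pigeon {A} (L : list A) (f : nat -> A) :
  (forall k, (k <= length L)%nat -> In (f k) L) ->
  exists k1 k2, (k1 < k2 <= length L)%nat /\ f k1 = f k2.
Proof.
  intro H. apply NNPP; intro Hn.
  assert (ND : NoDup (map f (seq 0 (S (length L))))).
  { apply NoDup_map_seq. intros k1 k2 ? ? ? E. apply Hn. exists k1, k2. split; [lia|auto]. }
  apply NoDup_incl_length with (l' := L) in ND.
  - rewrite length_map, length_seq in ND; lia.
  - intros x Hx. apply in_map_iff in Hx. destruct Hx as [k [<- Hk]]. apply in_seq in Hk.
    apply H; lia.
Qed.

Lemma add_cancel x u v : add x u = add x v -> u = v.
Proof. destruct x, u, v; unfold add; simpl; intro E; inversion E; f_equal; lia. Qed.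

Lemma bond_sym {Sigma} (al : assembly Sigma) u v : bond al u v -> bond al v u.
Proof.
  intros [d [tu [tv [E [Hu [Hv Hg]]]]]]. exists (opp d), tv, tu.
  split; [|split; [auto|split; [auto|]]].
  - subst v. destruct d; simpl; pt.
  - rewrite <- Hg. destruct d; reflexivity.
Qed.

Lemma core {Sigma} (T : list (tile Sigma)) (sigma : tile Sigma) (alpha : assembly Sigma) (m p : list dir) :
  confluent T sigma -> producible T sigma alpha -> p <> nil -> (1 <= length m)%nat ->
  binding_graph_is alpha origin (upw m p) ->
  alpha (walk origin (upw m p) (length m)) = alpha (walk origin (upw m p) (length m + length p)) ->
  forall (i k : nat), (k <= length p)%nat ->
    alpha (add (add (word_vec m) (scal (Z.of_nat i) (word_vec p))) (word_vec (firstn k p)))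
    = alpha (add (word_vec m) (word_vec (firstn k p))).
Proof.
  intros Hconf Hprod Hp Hm1 Hbg Heq.
  pose proof Hprod as [[HasT Hsig] [Hstab Horig]].
  destruct Hbg as [Hinj [Hdom Hbond]].
  set (a := length m) in *. set (Dl := length p) in *.
  assert (HD : Dl <> 0%nat) by (unfold Dl; destruct p; simpl; congruence).
  set (w := upw m p) in *. set (W := walk origin w) in *.
  assert (Per1 : forall i, (a <= i)%nat -> w (i + Dl)%nat = w i).
  { intros i Hi. unfold w. rewrite !upw_ge by lia. f_equal. fold a Dl.
    replace (i + Dl - a)%nat with ((i - a) + 1 * Dl)%nat by lia. apply Nat.Div0.mod_add. }
  set (D := psub (W (a + Dl)%nat) (W a)).
  assert (Per2 : forall j, W (a + j + Dl)%nat = add (W (a + j)%nat) D).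
  { induction j.
    - rewrite Nat.add_0_r. unfold D, psub. destruct (W (a+Dl)%nat), (W a); unfold add; simpl; f_equal; ring.
    - replace (a + S j + Dl)%nat with (S (a + j + Dl)) by lia.
      replace (a + S j)%nat with (S (a + j)) by lia.
      unfold W; simpl walk. fold W. rewrite IHj.
      replace (a + j + Dl)%nat with (a + j + Dl)%nat by lia.
      rewrite Per1 by lia.
      destruct (W (a+j)%nat), D, (vec (w (a+j)%nat)); unfold add; simpl; f_equal; ring. }
  assert (W0 : W 0%nat = origin) by reflexivity.
  set (beta := fun v => if excluded_middle_informative (exists i, (a + Dl <= i)%nat /\ W i = v)
                        then alpha (psub v D) else alpha v).
  assert (Hb1 : forall i, (i < a + Dl)%nat -> beta (W i) = alpha (W i)).
  { intros i Hi. unfold beta. destruct excluded_middle_informative as [[j [Hj E]]|]; auto.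
    apply Hinj in E. lia. }
  assert (Hb2 : forall i, (a + Dl <= i)%nat -> beta (W i) = alpha (W (i - Dl)%nat)).
  { intros i Hi. unfold beta. destruct excluded_middle_informative as [|n].
    - replace i with (a + (i - Dl - a) + Dl)%nat by lia. rewrite Per2.
      replace (a + (i - Dl - a) + Dl - Dl)%nat with (a + (i - Dl - a))%nat by lia.
      f_equal. destruct (W (a + (i - Dl - a))%nat), D; unfold psub, add; simpl; f_equal; ring.
    - exfalso; apply n; exists i; auto. }
  assert (Hoff : forall v, (forall i, W i <> v) -> beta v = None /\ alpha v = None).
  { intros v Hv.
    assert (alpha v = None).
    { destruct (alpha v) eqn:E; auto. exfalso. assert (in_dom alpha v) by (unfold in_dom; congruence).
      apply Hdom in H. destruct H as [i Hi]. exact (Hv i Hi). }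
    split; auto. unfold beta. destruct excluded_middle_informative as [[j [_ E]]|]; auto.
    exfalso; exact (Hv j E). }
  assert (Hon : forall v, beta v <> None -> exists i, W i = v).
  { intros v Hv. apply NNPP; intro Hn. apply Hv. apply Hoff. intros i E; apply Hn; eauto. }
  assert (Hgen : forall n k, beta (W n) = alpha (W k) -> beta (W (S n)) = alpha (W (S k)) ->
                  w k = w n -> bond beta (W n) (W (S n))).
  { intros n k E1 E2 Ew.
    assert (Hbk : bond alpha (W k) (W (S k))) by (apply Hbond; exists k; left; auto).
    destruct Hbk as [d [tu [tv [E [Hu [Hv Hg]]]]]].
    assert (vd : vec d = vec (w k)).
    { apply (add_cancel (W k)). rewrite <- E. reflexivity. }
    exists d, tu, tv. split; [|split; [congruence|split; [congruence|auto]]].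
    unfold W at 1; simpl walk. fold W. rewrite vd, Ew. reflexivity. }
  assert (Hstep : forall n, bond beta (W n) (W (S n))).
  { intro n. destruct (Nat.ltb_spec (S n) (a + Dl)).
    - apply (Hgen n n); auto; apply Hb1; lia.
    - destruct (Nat.eqb_spec (S n) (a + Dl)).
      + apply (Hgen n n); auto. apply Hb1; lia.
        rewrite Hb2 by lia. rewrite e. replace (a + Dl - Dl)%nat with a by lia. auto.
      + apply (Hgen n (n - Dl)%nat).
        * apply Hb2; lia.
        * rewrite Hb2 by lia. f_equal. f_equal. lia.
        * replace n with ((n - Dl) + Dl)%nat at 2 by lia. rewrite Per1 by lia. reflexivity. }
  assert (Hc0 : forall n, clos_refl_trans point (bond beta) (W 0%nat) (W n) /\
                          clos_refl_trans point (bond beta) (W n) (W 0%nat)).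
  { induction n; [split; apply rt_refl|]. destruct IHn. split.
    - eapply rt_trans; [eauto|]. apply rt_step, Hstep.
    - eapply rt_trans; [|eauto]. apply rt_step, bond_sym, Hstep. }
  assert (Hbprod : producible T sigma beta).
  { split; [split|split].
    - intros v t Hv. unfold beta in Hv. destruct excluded_middle_informative; eapply HasT; eauto.
    - intros HnT.
      assert (key : forall u, beta u = Some sigma -> u = origin).
      { intros u Hu. destruct (Hon u) as [i <-]; [congruence|].
        destruct (Nat.ltb_spec i (a + Dl)).
        - rewrite Hb1 in Hu by auto. eapply Hsig; eauto.
        - rewrite Hb2 in Hu by auto. assert (W (i - Dl)%nat = W 0%nat) by (rewrite W0; eapply Hsig; eauto).
          apply Hinj in H0. lia. }
      intros u v Hu Hv. rewrite (key u Hu), (key v Hv). auto.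
    - intros u v Hu Hv. destruct (Hon u Hu) as [i <-], (Hon v Hv) as [j <-].
      eapply rt_trans; [apply Hc0|apply Hc0].
    - rewrite <- W0, Hb1 by lia. rewrite W0; auto. }
  assert (Hper : forall j, alpha (W (a + Dl + j)%nat) = alpha (W (a + j)%nat)).
  { intro j. rewrite (Hconf alpha beta Hprod Hbprod).
    - rewrite Hb2 by lia. f_equal. f_equal. lia.
    - apply Hdom. eauto.
    - unfold in_dom. rewrite Hb2 by lia. assert (in_dom alpha (W (a + Dl + j - Dl)%nat)) by (apply Hdom; eauto).
      exact H. }
  assert (Hperi : forall i j, alpha (W (a + i * Dl + j)%nat) = alpha (W (a + j)%nat)).
  { induction i; intro j. - f_equal; f_equal; lia.
    - replace (a + S i * Dl + j)%nat with (a + Dl + (i * Dl + j))%nat by lia.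
      rewrite Hper. replace (a + (i * Dl + j))%nat with (a + i * Dl + j)%nat by lia. auto. }
  assert (Hmv : W a = word_vec m).
  { assert (H : walk origin w (0 + length m) = add (walk origin w 0) (word_vec (firstn (length m) m))).
    { apply walk_firstn; auto. intros j Hj. apply upw_lt; auto. }
    rewrite firstn_all in H. simpl in H. unfold W, a. rewrite H.
    destruct (word_vec m); unfold add, origin; simpl; f_equal. }
  assert (Hpk : forall i k, (k <= Dl)%nat -> W (a + i * Dl + k)%nat = add (W (a + i * Dl)%nat) (word_vec (firstn k p))).
  { intros i k Hk. apply walk_firstn; auto. intros j Hj. unfold w. rewrite upw_ge by (fold a; lia).
    fold a Dl. f_equal. replace (a + i * Dl + j - a)%nat with (j + i * Dl)%nat by lia.
    rewrite Nat.Div0.mod_add. apply Nat.mod_small; auto. }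
  assert (Hi : forall i, W (a + i * Dl)%nat = add (word_vec m) (scal (Z.of_nat i) (word_vec p))).
  { induction i.
    - rewrite Nat.mul_0_l, Nat.add_0_r, Hmv. simpl. destruct (word_vec m); unfold add, scal; simpl; f_equal; ring.
    - replace (a + S i * Dl)%nat with (a + i * Dl + Dl)%nat by lia. rewrite (Hpk i Dl) by lia.
      replace (firstn Dl p) with p by (unfold Dl; rewrite firstn_all; auto). rewrite IHi, Nat2Z.inj_succ.
      destruct (word_vec m), (word_vec p); unfold add, scal; simpl; f_equal; ring. }
  intros i k Hk.
  rewrite <- Hi, <- Hpk by auto.
  pose proof (Hi 0%nat) as H0. simpl in H0.
  replace (add (word_vec m) (word_vec (firstn k p))) with (W (a + 0 * Dl + k)%nat).
  - rewrite Hperi. rewrite Hperi. reflexivity.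
  - rewrite Hpk by auto. rewrite Nat.mul_0_l, Nat.add_0_r, Hmv. reflexivity.
Qed.

Theorem mainTheorem2 (Sigma : Type) (T : list (tile Sigma)) (sigma : tile Sigma)
  (alpha : assembly Sigma) (m p : list dir) :
  (exists glues : list Sigma, forall g : Sigma, In g glues) ->
  confluent T sigma ->
  producible T sigma alpha ->
  p <> nil ->
  binding_graph_is alpha origin (upw m p) ->
  exists m' p' : list dir,
    p' <> nil /\
    binding_graph_is alpha origin (upw m' p') /\
    (forall (i k : nat), (k <= length p')%nat ->
       alpha (add (add (word_vec m') (scal (Z.of_nat i) (word_vec p')))
                  (word_vec (firstn k p')))
       = alpha (add (word_vec m') (word_vec (firstn k p')))).
Proof.
  intros _ Hconf Hprod Hp Hbg.
  pose proof Hprod as [[HasT Hsig] [Hstab Horig]].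
  pose proof Hbg as [Hinj [Hdom Hbond]].
  set (L := length m). set (P := length p).
  assert (HP : P <> 0%nat) by (unfold P; destruct p; simpl; congruence).
  set (W := walk origin (upw m p)).
  destruct (pigeon (map Some (sigma :: T)) (fun k => alpha (W (L + S k * P)%nat))) as [k1 [k2 [Hk Hf]]].
  { intros k _. destruct (alpha (W (L + S k * P)%nat)) eqn:E.
    - apply in_map. destruct (HasT _ _ E); [right; auto | left; auto].
    - exfalso. assert (in_dom alpha (W (L + S k * P)%nat)) by (apply Hdom; eauto). exact (H E). }
  cbv beta in Hf.
  destruct (Nat.le_exists_sub (S k1) k2) as [e [He _]]; [lia|].
  set (m' := m ++ rep (S k1) p). set (p' := rep (S e) p).
  assert (Hlm : length m' = (L + S k1 * P)%nat) by (unfold m'; rewrite length_app, rep_len; auto).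
  assert (Hlp : length p' = (S e * P)%nat) by (unfold p'; rewrite rep_len; auto).
  assert (Hp' : p' <> nil) by (intro E; rewrite E in Hlp; simpl in Hlp; lia).
  assert (Hup : forall i, upw m' p' i = upw m p i).
  { intro i. destruct (Nat.ltb_spec i (length m')).
    - rewrite upw_lt by auto. unfold m'. destruct (Nat.ltb_spec i L).
      + rewrite app_nth1 by auto. rewrite upw_lt; auto.
      + rewrite app_nth2 by auto. rewrite upw_ge by auto. apply rep_nth; auto. fold L. lia.
    - rewrite !upw_ge by (try fold L; lia). rewrite Hlm, Hlp. unfold p'. rewrite rep_nth; auto.
      2:{ apply Nat.mod_upper_bound. lia. }
      fold P L. f_equal.
      set (x := (i - (L + S k1 * P))%nat).
      replace (i - L)%nat with (x + S k1 * P)%nat by (unfold x; lia).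
      rewrite Nat.Div0.mod_add.
      rewrite (Nat.div_mod x (S e * P)) at 2 by lia.
      replace (S e * P * (x / (S e * P)) + x mod (S e * P))%nat
        with (x mod (S e * P) + (S e * (x / (S e * P))) * P)%nat by ring.
      rewrite Nat.Div0.mod_add. reflexivity. }
  exists m', p'. split; [auto|]. assert (Hbg' : binding_graph_is alpha origin (upw m' p')).
  { apply (bgi_ext _ _ _ _ (fun i => eq_sym (Hup i))); auto. }
  split; auto.
  apply core with (T := T) (sigma := sigma); auto.
  - rewrite Hlm; lia.
  - rewrite !(walk_ext origin (upw m' p') (upw m p) Hup). fold W. rewrite Hlm, Hlp.
    rewrite Hf. f_equal. f_equal. rewrite He. ring.
Qed.
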